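(* Let $k,l$ be positive integers and $q\in\mathbb{C}$ with $|q|<1$. Then $$\sum q^{\lambda_1+\cdots+\lambda_l+\lambda_{l+1}}=\prod_{j=1}^{l+1}\frac{1}{1-q^{jk}}\cdot\frac{1-q+q^{lk+1}-q^{k(l+1)}}{1-q},$$ where the sum is over all integer tuples $(\lambda_1,\dots,\lambda_{l+1})$ with $\lambda_1\ge\lambda_2\ge\cdots\ge\lambda_{l+1}\ge0$ and $k\mid\lambda_j$ for $1\le j\le l$. *)

(* Defs.v *)
From HB Require Import structures.
From mathcomp Require Import all_boot all_order all_algebra.
From mathcomp Require Import complex.
From mathcomp Require Import all_classical all_reals all_analysis.

Set Implicit Arguments.
Unset Strict Implicit.
Unset Printing Implicit Defensive.

Import Order.TTheory GRing.Theory Num.Theory.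
Import numFieldTopology.Exports numFieldNormedType.Exports.
Local Open Scope ring_scope.

(* Equip C = R[i] with its standard normed-module structure (norm = complex modulus),
   obtained from the generic numFieldType one, so that limits in R[i] make sense. *)
HB.instance Definition _ (R : rcfType) := NormedModule.copy R[i] (R[i])^o.

(* A tuple (lambda_1, ..., lambda_{l+1}) is encoded as t : 'I_(l+1) -> nat
   with lambda_{i+1} = t i. *)
Definition admissible (k l : nat) (t : 'I_l.+1 -> nat) : bool :=
  [forall i : 'I_l.+1, forall j : 'I_l.+1, (i <= j)%N ==> (t j <= t i)%N]
  && [forall i : 'I_l.+1, (i < l)%N ==> (k %| t i)%N].
Arguments admissible : clear implicits.

(* Partial sum over admissible tuples with all entries <= N
   (equivalently lambda_1 <= N); these finite sets exhaust the index set. *)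
Definition partial_sum (R : realType) (k l : nat) (q : R[i]) (N : nat) : R[i] :=
  \sum_(t : {ffun 'I_l.+1 -> 'I_N.+1} | admissible k l (fun i => nat_of_ord (t i)))
     q ^+ (\sum_(i < l.+1) nat_of_ord (t i))%N.
Arguments partial_sum : clear implicits.

(* Main.v *)
Require Import Defs.
From HB Require Import structures.
From mathcomp Require Import all_boot all_order all_algebra.
From mathcomp Require Import complex.
From mathcomp Require Import all_classical all_reals all_analysis.
From mathcomp Require Import ring.
Import Order.TTheory GRing.Theory Num.Theory.
Import numFieldTopology.Exports numFieldNormedType.Exports.
Local Open Scope classical_set_scope.
Local Open Scope ring_scope.
Set Implicit Arguments.

Definition fcons (T : Type) n (a : T) (t : {ffun 'I_n -> T}) : {ffun 'I_n.+1 -> T} :=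
  [ffun i => if unlift ord0 i is Some j then t j else a].

Lemma fcons0 (T : Type) (n : nat) (a : T) (t : {ffun 'I_n -> T}) : fcons a t ord0 = a :> T.
Proof. by rewrite /fcons ffunE unlift_none. Qed.

Lemma fconsS (T : Type) (n : nat) (a : T) (t : {ffun 'I_n -> T}) (j : 'I_n) : fcons a t (lift ord0 j) = t j.
Proof. by rewrite /fcons ffunE liftK. Qed.

Lemma sum_ffunS (K : nmodType) (T : finType) n (G : {ffun 'I_n.+1 -> T} -> K) :
  \sum_(t : {ffun 'I_n.+1 -> T}) G t =
  \sum_(a : T) \sum_(t : {ffun 'I_n -> T}) G (fcons a t).
Proof.
rewrite pair_big /=.
rewrite (reindex (fun p : T * {ffun 'I_n -> T} => fcons p.1 p.2)) //=.
exists (fun f : {ffun 'I_n.+1 -> T} => (f ord0, [ffun j => f (lift ord0 j)])).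
  move=> [a t] _ /=; rewrite fcons0; congr pair; apply/ffunP => j.
  by rewrite ffunE fconsS.
move=> f _; apply/ffunP => i; rewrite /fcons ffunE.
by case: unliftP => [j ->|->] //; rewrite ffunE.
Qed.

Definition decf n (u : 'I_n -> nat) :=
  [forall i : 'I_n, forall j : 'I_n, (i <= j)%N ==> (u j <= u i)%N].

Lemma decf_cons n B (a : 'I_B) (t : {ffun 'I_n.+1 -> 'I_B}) :
  decf (fun i => nat_of_ord (fcons a t i)) =
  ((t ord0 <= a)%N && decf (fun i => nat_of_ord (t i))).
Proof.
apply/idP/idP.
  move=> /forallP H; apply/andP; split.
    have := H ord0 => /forallP /(_ (lift ord0 ord0)).
    by rewrite fcons0 fconsS.
  apply/forallP => i; apply/forallP => j; apply/implyP => hij.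
  have := H (lift ord0 i) => /forallP /(_ (lift ord0 j)).
  by rewrite !fconsS /= /bump /= !add1n ltnS hij.
move=> /andP [h0 /forallP H]; apply/forallP => i; apply/forallP => j.
apply/implyP; case: (unliftP ord0 i) => [i' ->|->]; case: (unliftP ord0 j) => [j' ->|->].
- rewrite !fconsS /= /bump /= !add1n ltnS => hij.
  by have := H i' => /forallP /(_ j') /implyP; apply.
- by rewrite /= /bump /= add1n.
- move=> _; rewrite fcons0 fconsS; apply: leq_trans h0.
  by have := H ord0 => /forallP /(_ j') /implyP; apply.
- by rewrite fcons0.
Qed.


Fixpoint NSh (K : pzSemiRingType) (n : nat) (h : nat -> nat -> K) (c : nat) {struct n} : K :=
  match n with
  | 0 => \sum_(a < c.+1) h 0%N a
  | n'.+1 => \sum_(a < c.+1) h 0%N a * NSh K n' (fun i => h i.+1) a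
  end.
Arguments NSh {K}.

Lemma conv (K : nmodType) B c (F : nat -> K) : (c < B)%N ->
  \sum_(a < B) (if (a <= c)%N then F a else 0) = \sum_(a < c.+1) F a.
Proof.
move=> cB; rewrite (big_ord_widen B F cB) [RHS]big_mkcond; apply: eq_bigr => i _.
by rewrite ltnS.
Qed.

Lemma sum_ffun0 (K : nmodType) (T : finType) (G : {ffun 'I_0 -> T} -> K) t0 :
  \sum_(t : {ffun 'I_0 -> T}) G t = G t0.
Proof.
have E : forall t : {ffun 'I_0 -> T}, t = t0 by move=> t; apply/ffunP => -[].
rewrite (eq_bigr (fun _ => G t0)); last by move=> t _; rewrite (E t).
by rewrite sumr_const card_ffun card_ord expn0.
Qed.

Lemma Q_NSh (K : comNzRingType) n (h : nat -> nat -> K) B c : (c < B)%N ->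
  \sum_(t : {ffun 'I_n.+1 -> 'I_B} | decf (fun i => nat_of_ord (t i)) && (t ord0 <= c)%N)
     \prod_(i < n.+1) h i (t i) = NSh n h c.
Proof.
elim: n h c => [|n IH] h c cB.
  rewrite big_mkcond sum_ffunS /= -(@conv _ _ _ _ cB); apply: eq_bigr => a _.
  rewrite (@sum_ffun0 _ _ _ [ffun i : 'I_0 => a]) fcons0 big_ord1 fcons0.
  have -> : decf (fun i => nat_of_ord (fcons a [ffun i : 'I_0 => a] i)).
    by apply/forallP => i; apply/forallP => j; rewrite (ord1 i) (ord1 j) /= leqnn.
  by [].
rewrite big_mkcond sum_ffunS /= -(@conv _ _ _ (fun a => h 0%N a * NSh n (fun i => h i.+1) a) cB); apply: eq_bigr => a _.
under eq_bigr => t _ do rewrite decf_cons fcons0 big_ord_recl fcons0.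
case: (leqP a c) => hac.
  rewrite -(IH (fun i => h i.+1) a (ltn_ord a)) [in RHS]big_mkcond mulr_sumr.
  apply: eq_bigr => t _; rewrite andbT [X in if X then _ else _]andbC.
  case: (_ && _); last by rewrite mulr0.
  by congr (_ * _); apply: eq_bigr => i _; rewrite fconsS lift0.
by apply: big1 => t _; rewrite andbF.
Qed.
Fixpoint Gs (K : pzSemiRingType) (n : nat) (w : K) (f : nat -> K) (M : nat) {struct n} : K :=
  match n with
  | 0 => f M
  | n'.+1 => \sum_(j < M.+1) w ^+ j * Gs K n' w f j
  end.
Arguments Gs {K}.

Definition hk (K : pzSemiRingType) (q : K) (k m i a : nat) : K :=
  if (i < m)%N && ~~ (k %| a)%N then 0 else q ^+ a.
Arguments hk {K}.

Definition phi (K : pzSemiRingType) (q : K) (k mu : nat) : K :=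
  \sum_(b < (k * mu).+1) q ^+ b.
Arguments phi {K}.

Lemma divsum (K : nmodType) k (F : nat -> K) N : (0 < k)%N ->
  \sum_(a < N.+1) (if (k %| a)%N then F a else 0) = \sum_(j < (N %/ k).+1) F (k * j)%N.
Proof.
move=> k0; elim: N => [|N IH].
  by rewrite !big_ord1 div0n big_ord1 muln0 dvdn0.
rewrite big_ord_recr /= IH divnS //.
case: (boolP (k %| N.+1)%N) => hd /=.
  rewrite add1n [RHS]big_ord_recr /=; congr (_ + _).
  by rewrite -[in LHS](divnK hd) divnS // hd add1n mulnC.
by rewrite add0n addr0.
Qed.

Lemma NSh_mult (K : comNzRingType) (q : K) k m j : (0 < k)%N ->
  NSh m (hk q k m) (k * j)%N = Gs m (q ^+ k) (phi q k) j.
Proof.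
move=> k0; elim: m j => [|m IH] j /=.
  by apply: eq_bigr => a _; rewrite /hk.
have -> : (fun i => hk q k m.+1 i.+1) = hk q k m by [].
rewrite (eq_bigr (fun a : 'I_(k * j).+1 => if (k %| a)%N then q ^+ a * NSh m (hk q k m) a else 0)); last first.
  by move=> a _; rewrite /hk /=; case: (k %| a)%N => //=; rewrite mul0r.
rewrite (@divsum _ _ (fun a => q ^+ a * NSh m (hk q k m) a)) // mulKn //.
by apply: eq_bigr => i _; rewrite IH exprM.
Qed.

Lemma NSh_Gs (K : comNzRingType) (q : K) k l N : (0 < k)%N -> (0 < l)%N ->
  NSh l (hk q k l) N = Gs l (q ^+ k) (phi q k) (N %/ k).
Proof.
move=> k0; case: l => // l _ /=.
have -> : (fun i => hk q k l.+1 i.+1) = hk q k l by [].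
rewrite (eq_bigr (fun a : 'I_N.+1 => if (k %| a)%N then q ^+ a * NSh l (hk q k l) a else 0)); last first.
  by move=> a _; rewrite /hk /=; case: (k %| a)%N => //=; rewrite mul0r.
rewrite (@divsum _ _ (fun a => q ^+ a * NSh l (hk q k l) a)) //.
by apply: eq_bigr => i _; rewrite NSh_mult // exprM.
Qed.

Lemma Gs_ext (K : pzSemiRingType) n (w : K) f g M : f =1 g -> Gs n w f M = Gs n w g M.
Proof.
move=> fg; elim: n M => [|n IH] M /=; first exact: fg.
by apply: eq_bigr => j _; rewrite IH.
Qed.

Lemma Gs_lin (K : comNzRingType) n (w a b : K) f g M :
  Gs n w (fun j => a * f j + b * g j) M = a * Gs n w f M + b * Gs n w g M.
Proof.
elim: n M => [|n IH] M //=.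
rewrite !mulr_sumr -big_split /=; apply: eq_bigr => j _; rewrite IH; ring.
Qed.

Lemma Gs_S (K : pzSemiRingType) n (w : K) f M :
  Gs n.+1 w f M = \sum_(j < M.+1) w ^+ j * Gs n w f j.
Proof. by []. Qed.

Lemma Gs_E0 (K : pzSemiRingType) n (w z : K) : Gs n w (fun j => z ^+ j) 0 = 1.
Proof. by elim: n => [|n IH] //=; rewrite big_ord1 IH expr0 mul1r. Qed.

Lemma Gs_10 (K : pzSemiRingType) n (w : K) : Gs n w (fun _ => 1) 0 = 1.
Proof. by elim: n => [|n IH] //=; rewrite big_ord1 IH expr0 mul1r. Qed.

Lemma Gs_rec (K : comNzRingType) n (w z : K) M :
  Gs n.+1 w (fun j => z ^+ j) M.+1 =
  Gs n w (fun _ => 1) M.+1 + w ^+ n.+1 * z * Gs n.+1 w (fun j => z ^+ j) M.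
Proof.
elim: n M => [|n IH] M.
  rewrite /= big_ord_recl /= expr0 !mul1r mulr_sumr; congr (_ + _).
  by apply: eq_bigr => j _; rewrite /bump leq0n add1n !exprS; ring.
rewrite Gs_S big_ord_recl Gs_E0 expr0 mul1r.
under eq_bigr => j _ do rewrite lift0 IH.
rewrite (@Gs_S _ n w (fun _ => 1)) [in RHS]big_ord_recl Gs_10 expr0 mul1r.
rewrite (@Gs_S _ n.+1 w (fun j => z ^+ j) M) !mulr_sumr -addrA -big_split /=; congr (_ + _).
by apply: eq_bigr => j _; rewrite /bump leq0n add1n !exprS; ring.
Qed.

Lemma hk_prod (K : comNzRingType) (q : K) k l (t : 'I_l.+1 -> nat) :
  (if [forall i : 'I_l.+1, (i < l)%N ==> (k %| t i)%N] then q ^+ (\sum_(i < l.+1) t i)%N else 0)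
  = \prod_(i < l.+1) hk q k l i (t i).
Proof.
case: (boolP [forall _, _]) => [/forallP H|/forallPn [i /negP Hi]].
  rewrite (big_morph (fun n => q ^+ n) (exprD q) (expr0 q)).
  apply: eq_bigr => i _; rewrite /hk.
  by have := H i => /implyP; case: (i < l)%N => //= ->.
rewrite (bigD1 i) //= /hk.
case: (i < l)%N Hi => /=; last by move=> /(_ isT).
by case: (k %| t i)%N => // _; rewrite mul0r.
Qed.
Lemma contr (K : numFieldType) (a b : nat -> K) (c L : K) :
  `|c| < 1 -> (forall eps, 0 < eps -> \forall n \near \oo, `|c| ^+ n <= eps) ->
  b @ \oo --> L -> (forall n, a n.+1 = b n.+1 + c * a n) ->
  a @ \oo --> L / (1 - c).
Proof.
move=> c1 Hpow Hb Hrec.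
have c1' : 1 - c != 0.
  rewrite subr_eq0; apply/eqP => E; move: c1; rewrite -E normr1 ltxx //.
set A := L / (1 - c).
have HA : A = L + c * A by rewrite /A; field.
apply/cvgrPdist_le => eps eps0.
set r := `|c|.
have r0 : 0 <= r by apply: normr_ge0.
have Hd : 0 < eps * (1 - r) / 2.
  by rewrite divr_gt0 // mulr_gt0 // subr_gt0.
move/cvgrPdist_le: Hb => /(_ _ Hd) [N0 _ HN0].
set D := `|A - a N0|.
have D0 : 0 <= D by apply: normr_ge0.
have claim : forall m, `|A - a (N0 + m)%N| <= eps / 2 + r ^+ m * D.
  elim=> [|m IH]; first by rewrite addn0 expr0 mul1r lerDr divr_ge0 // ltW.
  have -> : A - a (N0 + m.+1)%N = (L - b (N0 + m).+1) + c * (A - a (N0 + m)%N).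
    by rewrite addnS Hrec {1}HA; ring.
  apply: (le_trans (ler_normD _ _)); rewrite normrM -/r.
  have h1 : `|L - b (N0 + m).+1| <= eps * (1 - r) / 2.
    by apply: HN0; rewrite /= -addnS leq_addr.
  have h2 : r * `|A - a (N0 + m)%N| <= r * (eps / 2 + r ^+ m * D).
    by apply: ler_wpM2l.
  apply: (le_trans (lerD h1 h2)).
  have -> : eps * (1 - r) / 2 + r * (eps / 2 + r ^+ m * D) = eps / 2 + r ^+ m.+1 * D.
    by rewrite exprS; field.
  by [].
have He : 0 < eps / 2 / (D + 1).
  by rewrite divr_gt0 // ?divr_gt0 // ltr_wpDl.
move: (Hpow _ He) => [N1 _ HN1].
exists (N0 + N1)%N => // n /= Hn.
have -> : n = (N0 + (n - N0))%N by rewrite subnKC // (leq_trans _ Hn) // leq_addr.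
apply: (le_trans (claim _)).
have Hr : r ^+ (n - N0) * D <= eps / 2.
  have hr : r ^+ (n - N0) <= eps / 2 / (D + 1).
    by apply: HN1; rewrite /= leq_subRL // (leq_trans _ Hn) // leq_addr.
  apply: (le_trans (ler_wpM2r D0 hr)).
  rewrite mulrAC ler_pdivrMr ?ltr_wpDl //.
  by rewrite ler_wpM2l ?lerDl // divr_ge0 // ltW.
by rewrite [leRHS](splitr eps) lerD2l.
Qed.
Lemma powdec (R : realType) (c : R[i]) : `|c| < 1 ->
  forall eps, 0 < eps -> \forall n \near \oo, `|c| ^+ n <= eps.
Proof.
move=> c1 eps eps0.
have [s Hs] : exists s : R, eps = (s%:C)%C.
  by rewrite -(ger0_norm (ltW eps0)) normc_def; eexists.
have s0 : 0 < s by rewrite -ltcR rmorph0 -Hs.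
have [r Hr] : exists r : R, `|c| = (r%:C)%C by rewrite normc_def; eexists.
have r0 : 0 <= r by rewrite -ler0c -Hr normr_ge0.
have r1 : r < 1 by rewrite -ltcR rmorph1 -Hr.
have : (GRing.exp r : R ^nat) @ \oo --> 0 by apply: cvg_expr; rewrite ger0_norm.
move/cvgrPdist_le => /(_ _ s0); apply: filterS => n /=.
rewrite sub0r normrN => h; rewrite Hr Hs -rmorphXn lecR.
exact: le_trans (ler_norm _) h.
Qed.

Lemma ps_NSh (R : realType) k l (q : R[i]) N :
  partial_sum R k l q N = NSh l (hk q k l) N.
Proof.
rewrite /partial_sum -(@Q_NSh _ l (hk q k l) N.+1 N (ltnSn N)).
under [RHS]eq_bigl => t do rewrite (leq_ord (t ord0)) andbT.
rewrite /admissible big_mkcondr; apply: eq_bigr => t _.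
exact: (@hk_prod _ q k l (fun i => nat_of_ord (t i))).
Qed.

Lemma lt1_neq (R : realType) (y : R[i]) : `|y| < 1 -> 1 - y != 0.
Proof.
move=> hy; rewrite subr_eq0; apply/eqP => E; move: hy; rewrite -E normr1 ltxx //.
Qed.

Lemma lim1 (R : realType) (x : R[i]) (hx : `|x| < 1) n :
  Gs n x (fun _ => 1) @ \oo --> \prod_(1 <= j < n.+1) (1 - x ^+ j)^-1.
Proof.
elim: n => [|n IH].
  rewrite big_geq // (_ : Gs 0 x (fun _ => 1) = fun _ => 1) //; exact: cvg_cst.
have hc : `|x ^+ n.+1 * 1| < 1 by rewrite mulr1 normrX exprn_ilt1 // normr_ge0.
have E1 : forall M, Gs n.+1 x (fun _ => 1) M = Gs n.+1 x (fun j => (1:R[i]) ^+ j) M.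
  by move=> M; apply: Gs_ext => j; rewrite expr1n.
have rec : forall M, Gs n.+1 x (fun _ => 1) M.+1 = Gs n x (fun _ => 1) M.+1 + (x ^+ n.+1 * 1) * Gs n.+1 x (fun _ => 1) M.
  by move=> M; rewrite !E1 Gs_rec.
have H := @contr _ (Gs n.+1 x (fun _ => 1)) (Gs n x (fun _ => 1)) (x ^+ n.+1 * 1) _ hc (@powdec _ _ hc) IH rec.
rewrite mulr1 in H; rewrite big_nat_recr //; exact: H.
Qed.

Lemma lim2 (R : realType) (x : R[i]) (hx : `|x| < 1) n :
  Gs n.+1 x (fun j => x ^+ j) @ \oo --> (\prod_(1 <= j < n.+1) (1 - x ^+ j)^-1) / (1 - x ^+ n.+1 * x).
Proof.
have hc : `|x ^+ n.+1 * x| < 1 by rewrite -exprSr normrX exprn_ilt1 // normr_ge0.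
have rec : forall M, Gs n.+1 x (fun j => x ^+ j) M.+1 = Gs n x (fun _ => 1) M.+1 + (x ^+ n.+1 * x) * Gs n.+1 x (fun j => x ^+ j) M.
  by move=> M; rewrite Gs_rec.
have H := (@contr _ _ (Gs n x (fun _ => 1)) _ _ hc (@powdec _ _ hc) (@lim1 _ _ hx n) rec). exact: H.
Qed.

Lemma phiE (R : realType) (q : R[i]) k j : 1 - q != 0 ->
  phi q k j = (1 - q)^-1 * 1 + (- q / (1 - q)) * (q ^+ k) ^+ j.
Proof.
move=> q1; have q1' : q - 1 != 0 by rewrite -opprB oppr_eq0.
apply: (@mulfI _ (q - 1)) => //.
rewrite /phi -subrX1 exprS -exprM; field.
by [].
Qed.

Theorem lemma11 (R : realType) (k l : nat) (q : R[i])
  (hk : (0 < k)%N) (hl : (0 < l)%N) (hq : `|q| < 1) :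
  partial_sum R k l q N @[N --> \oo] -->
    (\prod_(1 <= j < l.+2) (1 - q ^+ (j * k))^-1) *
    ((1 - q + q ^+ (l * k + 1) - q ^+ (k * (l + 1))) / (1 - q)).
Proof.
have hx : `|q ^+ k| < 1 by rewrite normrX exprn_ilt1 ?normr_ge0 // -lt0n.
have q1 := @lt1_neq _ _ hq.
case: l hl => // l _.
have L1 := @lim1 _ _ hx l.+1.
have L2 := @lim2 _ _ hx l.
have HG := cvgD (cvgMl_tmp (a := (1 - q)^-1) L1) (cvgMl_tmp (a := - q / (1 - q)) L2).
have {}HG := HG eventually_filter eventually_filter eventually_filter.
have HC := cvg_comp _ _ (@cvg_divnr k hk) HG.
have EF : partial_sum R k l.+1 q = ((fun x => (1 - q)^-1 * Gs l.+1 (q ^+ k) (fun=> 1) x) +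
   (fun x => - q / (1 - q) * Gs l.+1 (q ^+ k) (fun j => (q ^+ k) ^+ j) x)) \o divn^~ k.
  apply: funext => N; rewrite /= ps_NSh NSh_Gs //.
  rewrite (@Gs_ext _ _ _ _ (fun j => (1 - q)^-1 * 1 + (- q / (1 - q)) * (q ^+ k) ^+ j)).
    by rewrite Gs_lin.
  by move=> j; apply: phiE.
rewrite EF.
have n1 : 1 - (q ^+ k) ^+ l.+1 != 0.
  by apply: lt1_neq; rewrite normrX exprn_ilt1 ?normr_ge0.
have n2 : 1 - (q ^+ k) ^+ l.+2 != 0.
  by apply: lt1_neq; rewrite normrX exprn_ilt1 ?normr_ge0.
suff -> : \prod_(1 <= j < l.+3) (1 - q ^+ (j * k))^-1 *
   ((1 - q + q ^+ (l.+1 * k + 1) - q ^+ (k * (l.+1 + 1))) / (1 - q)) =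
  (1 - q)^-1 * \prod_(1 <= j < l.+2) (1 - q ^+ k ^+ j)^-1 +
  - q / (1 - q) * (\prod_(1 <= j < l.+1) (1 - q ^+ k ^+ j)^-1 / (1 - q ^+ k ^+ l.+1 * q ^+ k)).
  exact: HC.
rewrite (eq_bigr (fun j => (1 - (q ^+ k) ^+ j)^-1)); last by move=> j _; rewrite mulnC exprM.
rewrite [\prod_(1 <= j < l.+3) _]big_nat_recr // [\prod_(1 <= j < l.+2) _]big_nat_recr //.
rewrite exprD expr1 (mulnC l.+1 k) exprM addn1 exprM -exprSr.
set P := \prod_(1 <= j < l.+1) _.
set x := q ^+ k.
change (P * (1 - x ^+ l.+1)^-1 * (1 - x ^+ l.+2)^-1 * ((1 - q + x ^+ l.+1 * q - x ^+ l.+2) / (1 - q)) = (1 - q)^-1 * (P * (1 - x ^+ l.+1)^-1) + - q / (1 - q) * (P / (1 - x ^+ l.+2))).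
field.
by rewrite n1 n2 q1.
Qed.
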